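(* Let $\omega=\frac{-1+\sqrt{-3}}{2}$, so that $-\omega$ is a primitive $6$-th root of unity, and let $\zeta_{12}$ be a primitive $12$-th root of unity. Then $$\{\operatorname{Tr}(M) : M\in G_q(-\omega)\}=\{0,\ c,\ \sqrt{3}\,\zeta_{12}\,c,\ 2c : c=(-\omega)^j,\ j=0,1,\dots,5\}.$$ In particular this set of traces is finite.
   Context: Let $q$ be a formal parameter and let $R_q=\begin{pmatrix} q & 1\\ 0 & 1\end{pmatrix}$, $S_q=\begin{pmatrix} 0 & -q^{-1}\\ 1 & 0\end{pmatrix}\in \mathrm{GL}(2,\mathbb{Z}[q,q^{-1}])$. Let $G_q=\langle R_q,S_q\rangle$ be the group they generate. For $\zeta\in\mathbb{C}^*$, set $G_q(\zeta)=\{M_q|_{q=\zeta} : M_q\in G_q\}\subset \mathrm{GL}(2,\mathbb{C})$. *)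

(* Defs.v *)
From HB Require Import structures.
From mathcomp Require Import all_boot all_order all_algebra all_field.
Set Implicit Arguments. Unset Strict Implicit. Unset Printing Implicit Defensive.
Import Order.TTheory GRing.Theory Num.Theory.
Local Open Scope ring_scope.

(* Complex numbers are modelled by algC (algebraic complex numbers); all the
   quantities involved (roots of unity, sqrt 3, traces) are algebraic. *)

(* omega = (-1 + sqrt(-3))/2 ; sqrtC picks the root with nonnegative imaginary
   part, so sqrtC (-3) = i*sqrt 3. *)
Definition omega : algC := (-1 + sqrtC (-3)) / 2.

Definition Rmx (z : algC) : 'M[algC]_2 :=
  \matrix_(i < 2, j < 2)
    (if i == 0 :> nat then (if j == 0 :> nat then z else 1)
     else (if j == 0 :> nat then 0 else 1)).

Definition Smx (z : algC) : 'M[algC]_2 :=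
  \matrix_(i < 2, j < 2)
    (if i == 0 :> nat then (if j == 0 :> nat then 0 else - z^-1)
     else (if j == 0 :> nat then 1 else 0)).

Definition gen_at (z : algC) (l : bool * bool) : 'M[algC]_2 :=
  let g := if l.1 then Smx z else Rmx z in
  if l.2 then invmx g else g.

Definition eval_word (z : algC) (w : seq (bool * bool)) : 'M[algC]_2 :=
  foldr (fun l M => gen_at z l *m M) 1%:M w.

(* G_q(z) : specialisations at q = z of all elements of G_q = <R_q, S_q>. *)
Definition Gspec (z : algC) : 'M[algC]_2 -> Prop :=
  fun M => exists w : seq (bool * bool), M = eval_word z w.

(* Main.v *)
Require Import Defs.
From HB Require Import structures.
From mathcomp Require Import all_boot all_order all_algebra all_field.
From mathcomp Require Import ring zify.
Import Order.TTheory GRing.Theory Num.Theory.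
Local Open Scope ring_scope.

Definition u : algC := - omega.

Lemma hu : u ^+ 2 = u - 1.
Proof.
have r2 : sqrtC (-3) ^+ 2 = -3 :> algC by rewrite sqrtCK.
rewrite /u /omega. field: r2; by rewrite ?pnatr_eq0.
Qed.

Lemma hu3 : u ^+ 3 = -1.
Proof. rewrite exprS hu. ring: hu. Qed.

Lemma hu6 : u ^+ 6 = 1.
Proof. by rewrite (_ : 6 = 3 * 2)%N // exprM hu3 sqrrN expr1n. Qed.

Lemma umod n : u ^+ n = u ^+ (n %% 6).
Proof. by rewrite {1}(divn_eq n 6) exprD (mulnC (n %/ 6)%N) exprM hu6 expr1n mul1r. Qed.

Definition mkT (a k : nat) (x : algC) : 'M[algC]_2 :=
  \matrix_(i < 2, j < 2)
    (if i == 0 :> nat then (if j == 0 :> nat then u ^+ a else x)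
     else (if j == 0 :> nat then 0 else u ^+ (a + k))).

Definition P : 'M[algC]_2 :=
  \matrix_(i < 2, j < 2)
    (if i == 0 :> nat then (if j == 0 :> nat then 1 else 0)
     else (if j == 0 :> nat then 1 - u else 1)).
Definition Pi : 'M[algC]_2 :=
  \matrix_(i < 2, j < 2)
    (if i == 0 :> nat then (if j == 0 :> nat then 1 else 0)
     else (if j == 0 :> nat then u - 1 else 1)).

Ltac mx2 := apply/matrixP; case=> [[|[|//]] ?]; case=> [[|[|//]] ?];
  rewrite !(mxE, big_ord_recr, big_ord0) /=.

Lemma PiP : Pi *m P = 1%:M.
Proof. mx2; ring. Qed.

Lemma mkTM a k x a' k' x' :
  mkT a k x *m mkT a' k' x' = mkT (a + a') (k + k') (u ^+ a * x' + x * u ^+ (a' + k')).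
Proof.
mx2; rewrite ?addr0 ?add0r ?mul0r ?mulr0 ?addr0 ?add0r;
rewrite ?(addnACA a a') ?exprD; ring.
Qed.

Lemma conjM a k x a' k' x' :
  (P *m mkT a k x *m Pi) *m (P *m mkT a' k' x' *m Pi) =
  P *m mkT (a + a') (k + k') (u ^+ a * x' + x * u ^+ (a' + k')) *m Pi.
Proof.
by rewrite -!mulmxA (mulmxA Pi) PiP mul1mx !mulmxA -mkTM -!mulmxA.
Qed.

Definition ag (l : bool * bool) : nat :=
  match l with (false, false) => 0 | (true, false) => 1 | (false, true) => 0 | (true, true) => 5 end.
Definition kg (l : bool * bool) : nat :=
  match l with (false, false) => 1 | (true, false) => 3 | (false, true) => 5 | (true, true) => 3 end.
Definition xg (l : bool * bool) : algC :=
  match l with (false, false) => 1 | (true, false) => u - 1 | (false, true) => u - 1 | (true, true) => 1 end.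

Lemma Rdec : Rmx u = P *m mkT 0 1 1 *m Pi.
Proof. rewrite /Rmx. mx2; rewrite ?expr0 ?expr1; ring: hu. Qed.

Lemma uinv : u^-1 = 1 - u.
Proof.
have h : u * (1 - u) = 1 by rewrite mulrBr mulr1 -expr2 hu; ring.
have unz : u != 0 by apply/eqP => u0; move: h; rewrite u0 mul0r => /eqP; rewrite eq_sym oner_eq0.
by apply: (mulfI unz); rewrite mulfV // h.
Qed.

Lemma Sdec : Smx u = P *m mkT 1 3 (u - 1) *m Pi.
Proof. rewrite /Smx uinv. mx2; rewrite ?expr0 ?expr1 ?hu3; ring: hu. Qed.

Lemma inv_of (A X : 'M[algC]_2) : A *m X = 1%:M -> invmx A = X.
Proof.
move=> h; have [uA _] := mulmx1_unit h.
by rewrite -[invmx A]mulmx1 -h mulmxA mulVmx // mul1mx.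
Qed.

Lemma hu4 : u ^+ 4 = - u.
Proof. by rewrite exprS hu3 mulrN1. Qed.
Lemma hu5 : u ^+ 5 = 1 - u.
Proof. rewrite exprS hu4; ring: hu. Qed.

Ltac usimp := rewrite ?exprD ?hu6 ?hu5 ?hu4 ?hu3 ?hu ?expr1 ?expr0; ring: hu.

Lemma Ridec : invmx (Rmx u) = P *m mkT 0 5 (u - 1) *m Pi.
Proof. apply: inv_of. rewrite Rdec conjM. mx2; usimp. Qed.

Lemma Sidec : invmx (Smx u) = P *m mkT 5 3 1 *m Pi.
Proof. apply: inv_of. rewrite Sdec conjM. mx2; usimp. Qed.

Fixpoint akw (w : seq (bool * bool)) : nat * nat :=
  match w with
  | [::] => (0%N, 0%N)
  | l :: w' => (ag l + (akw w').1, kg l + (akw w').2)%N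
  end.

Lemma gen_dec l : gen_at u l = P *m mkT (ag l) (kg l) (xg l) *m Pi.
Proof. by case: l => [[] []]; rewrite /gen_at /= ?Ridec ?Sidec ?Rdec ?Sdec. Qed.

Lemma word_dec w : exists x, eval_word u w = P *m mkT (akw w).1 (akw w).2 x *m Pi.
Proof.
elim: w => [|l w [x IH]].
  exists 0; rewrite /eval_word /=; apply/esym; mx2; usimp.
eexists; rewrite /eval_word /= -/(eval_word u w) IH gen_dec conjM; reflexivity.
Qed.

Lemma tr_dec a k x : \tr (P *m mkT a k x *m Pi) = u ^+ a + u ^+ (a + k).
Proof.
rewrite mxtrace_mulC mulmxA PiP mul1mx /mxtrace !(big_ord_recr, big_ord0) /= !mxE /=.
by rewrite add0r.
Qed.

Lemma word_tr w : \tr (eval_word u w) = u ^+ (akw w).1 + u ^+ ((akw w).1 + (akw w).2).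
Proof. by have [x ->] := word_dec w; rewrite tr_dec. Qed.

Lemma akw_nseq n l w :
  akw (nseq n l ++ w) = (n * ag l + (akw w).1, n * kg l + (akw w).2)%N.
Proof.
elim: n => [|n IH] /=; first by rewrite ?mul0n ?add0n; case: (akw w).
by rewrite IH /= !mulSn !addnA.
Qed.

Lemma akw_nseq' n l : akw (nseq n l) = (n * ag l, n * kg l)%N.
Proof. by have := akw_nseq n l [::]; rewrite cats0 /= !addn0. Qed.

Lemma bwd a k : exists M, Gspec u M /\ \tr M = u ^+ a + u ^+ (a + k).
Proof.
exists (eval_word u (nseq a (true, false) ++ nseq (k + 3 * a) (false, false))).
split; first by eexists.
rewrite word_tr !akw_nseq /= ?muln0 ?muln1 ?addn0.
rewrite akw_nseq' /= ?muln0 ?muln1 ?addn0.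
have -> : u ^+ (a + (a * 3 + (k + 3 * a))) = u ^+ ((a + k) + 6 * a).
  by congr (u ^+ _); lia.
by rewrite (exprD _ (a + k)) exprM hu6 expr1n mulr1.
Qed.

Lemma sform (z12 : algC) : 12.-primitive_root z12 ->
  exists kk : nat, sqrtC 3 * z12 = (2 - u) * u ^+ kk.
Proof.
move=> pz.
set y := z12 ^+ 2.
have y3 : y ^+ 3 != 1 by rewrite /y -exprM -(prim_order_dvd pz).
have y2 : y ^+ 2 != 1 by rewrite /y -exprM -(prim_order_dvd pz).
have y6 : y ^+ 6 = 1 by rewrite /y -exprM (prim_expr_order pz).
have hy : y ^+ 2 - y + 1 = 0.
  have e : (y ^+ 3 - 1) * ((y + 1) * (y ^+ 2 - y + 1)) = y ^+ 6 - 1 by ring.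
  rewrite y6 subrr in e.
  move/eqP: e; rewrite !mulf_eq0 subr_eq0 (negbTE y3) /=.
  case/orP => [|/eqP //].
  rewrite addr_eq0 => /eqP ym1; move: y2; by rewrite ym1 sqrrN expr1n eqxx.
have hyu : (y - u) * (y - (1 - u)) = 0.
  by rewrite -[RHS]hy; ring: hu.
have s2 : (sqrtC 3 * z12) ^+ 2 = 3 * y by rewrite exprMn sqrtCK.
move/eqP: hyu; rewrite mulf_eq0 !subr_eq0 => /orP [] /eqP yE.
- have : (sqrtC 3 * z12) ^+ 2 == ((2 - u) * u) ^+ 2.
    by rewrite s2 yE; apply/eqP; ring: hu.
  rewrite eqf_sqr => /orP [] /eqP ->.
    by exists 1%N; rewrite expr1.
  by exists 4%N; rewrite hu4; ring.
- have : (sqrtC 3 * z12) ^+ 2 == (2 - u) ^+ 2.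
    by rewrite s2 yE; apply/eqP; ring: hu.
  rewrite eqf_sqr => /orP [] /eqP ->.
    by exists 0%N; rewrite expr0 mulr1.
  by exists 3%N; rewrite hu3; ring.
Qed.

Definition RHS (z12 t : algC) := t = 0 \/ exists j : 'I_6,
  let c := u ^+ j in t = c \/ t = sqrtC 3 * z12 * c \/ t = 2 * c.

Lemma R_U z12 n : RHS z12 (u ^+ n).
Proof. right; exists (Ordinal (ltn_pmod n (isT : 0 < 6)%N)); left; exact: umod. Qed.

Lemma R_2U z12 n : RHS z12 (2 * u ^+ n).
Proof.
right; exists (Ordinal (ltn_pmod n (isT : 0 < 6)%N)); right; right.
by rewrite /= -umod.
Qed.

Lemma R_S z12 kk n : sqrtC 3 * z12 = (2 - u) * u ^+ kk -> RHS z12 ((2 - u) * u ^+ n).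
Proof.
move=> hs; right; exists (Ordinal (ltn_pmod (n + 5 * kk) (isT : 0 < 6)%N)); right; left.
rewrite /= -umod hs -mulrA -exprD.
have -> : u ^+ (kk + (n + 5 * kk)) = u ^+ (n + 6 * kk) by congr (u ^+ _); lia.
by rewrite exprD exprM hu6 expr1n mulr1.
Qed.

Lemma fwd z12 kk a k : sqrtC 3 * z12 = (2 - u) * u ^+ kk ->
  RHS z12 (u ^+ a + u ^+ (a + k)).
Proof.
move=> hs; rewrite exprD (umod k).
have := ltn_pmod k (isT : 0 < 6)%N.
case: (k %% 6)%N => [|[|[|[|[|[|//]]]]]] _.
- have -> : u ^+ a + u ^+ a * u ^+ 0 = 2 * u ^+ a by rewrite expr0; ring.
  exact: R_2U.
- have -> : u ^+ a + u ^+ a * u ^+ 1 = (2 - u) * u ^+ (a + 1).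
    by rewrite exprD !expr1; ring: hu.
  exact: (R_S _ _ _ hs).
- have -> : u ^+ a + u ^+ a * u ^+ 2 = u ^+ (a + 1).
    by rewrite exprD !expr1 hu; ring.
  exact: R_U.
- by left; rewrite hu3; ring.
- have -> : u ^+ a + u ^+ a * u ^+ 4 = u ^+ (a + 5).
    by rewrite exprD hu5 hu4; ring.
  exact: R_U.
- have -> : u ^+ a + u ^+ a * u ^+ 5 = (2 - u) * u ^+ a.
    by rewrite hu5; ring.
  exact: (R_S _ _ _ hs).
Qed.

Theorem theorem1p3 (z12 : algC) (hz12 : 12.-primitive_root z12) (t : algC) :
  (exists M : 'M[algC]_2, Gspec (- omega) M /\ \tr M = t) <->
  (t = 0 \/
   exists j : 'I_6,
     let c := (- omega) ^+ j in
     t = c \/ t = sqrtC 3 * z12 * c \/ t = 2 * c).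
Proof.
have [kk hs] := sform _ hz12.
change (- omega) with u.
split.
  case=> M [[w ->] <-]; rewrite word_tr; exact: (fwd _ _ _ _ hs).
case=> [->|[j /= [->|[->|->]]]].
- have [M [GM trM]] := bwd 0 3; exists M; split => //.
  by rewrite trM hu3 expr0 subrr.
- have [M [GM trM]] := bwd (j + 5) 2; exists M; split => //.
  by rewrite trM !exprD hu5 hu; ring: hu.
- have [M [GM trM]] := bwd (kk + j) 5; exists M; split => //.
  by rewrite trM hs !exprD hu5; ring.
- have [M [GM trM]] := bwd j 0; exists M; split => //.
  by rewrite trM addn0; ring.
Qed.
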